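(* Let $G=(V,E)$ be a geodetic graph and let $(S,T)$ be a partition of $V$ into two sets such that: (1) $S$ and $T$ are geodetically closed, i.e., for all $u,v\in S$ the shortest path from $u$ to $v$ contains only vertices of $S$, and likewise for $T$; (2) for any two distinct edges $\{u,v\}$ and $\{w,x\}$ of the cut set with $u,w\in S$ and $v,x\in T$, the number $d(u,w)+d(v,x)$ is odd. Then for every integer $k\ge 0$, the graph $G'$ obtained from $G$ by subdividing every edge of the cut set with $k$ new vertices (i.e., replacing each such edge by a path of length $k+1$) is geodetic.
   Context: All graphs are finite, simple and undirected; $d(u,v)$ denotes the distance in $G$. A graph is geodetic if between any two vertices there is at most one shortest path. The cut set of the partition $(S,T)$ is the set of edges of $G$ with one endpoint in $S$ and the other in $T$. *)

(* Defs.v *)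
From mathcomp Require Import all_boot.
Set Implicit Arguments. Unset Strict Implicit. Unset Printing Implicit Defensive.

(* A graph is a relation e on a finite vertex type V (simple: symmetric and
   irreflexive, assumed in the theorem).  A walk from u to v is a sequence
   p of successive vertices (u excluded) with path e u p and last u p = v;
   its length is size p. *)
Section Graphs.
Variable V : finType.
Variable e : rel V.

Definition walk (u v : V) (p : seq V) : bool := path e u p && (last u p == v).

Definition shortest (u v : V) (p : seq V) : Prop :=
  walk u v p /\ forall q, walk u v q -> size p <= size q.

Definition geodetic : Prop :=
  forall u v p q, shortest u v p -> shortest u v q -> p = q.

(* d(u,v) = n  (only holds when u and v are connected) *)
Definition is_dist (u v : V) (n : nat) : Prop :=
  exists p, shortest u v p /\ size p = n.

Definition geod_closed (A : {set V}) : Prop :=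
  forall u v p, u \in A -> v \in A -> shortest u v p -> all (mem A) (u :: p).

Definition cut_edge (S : {set V}) (x y : V) : bool :=
  [&& x \in S, y \notin S & e x y].

Definition subdiv_vert (S : {set V}) (k : nat) :=
  {t : V * V * 'I_k | cut_edge S t.1.1 t.1.2}.

(* The cut edge {x,y} is replaced by the path x - (x,y,0) - ... - (x,y,k-1) - y.
   For k = 0 there are no new vertices and the cut edges are kept. *)
Definition subdiv_rel (S : {set V}) (k : nat) : rel (V + subdiv_vert S k) :=
  fun a b =>
    match a, b with
    | inl x, inl y => e x y && (((x \in S) == (y \in S)) || (k == 0))
    | inl z, inr t =>
        let: (x, y, i) := val t in
        ((z == x) && (val i == 0)) || ((z == y) && (val i == k.-1))
    | inr t, inl z =>
        let: (x, y, i) := val t in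
        ((z == x) && (val i == 0)) || ((z == y) && (val i == k.-1))
    | inr t1, inr t2 =>
        let: (x1, y1, i1) := val t1 in
        let: (x2, y2, i2) := val t2 in
        [&& x1 == x2, y1 == y2 & ((val i1).+1 == val i2) || ((val i2).+1 == val i1)]
    end.

End Graphs.
Arguments subdiv_rel {V} e S k.

(* Main.v *)
Require Import Defs.
From mathcomp Require Import all_boot zify.
From Stdlib Require Import Lia Classical.
Set Implicit Arguments. Unset Strict Implicit. Unset Printing Implicit Defensive.

Section Gen.
Variables (T : finType) (h : rel T).

Lemma walk_cat u v w p q : walk h u v p -> walk h v w q -> walk h u w (p ++ q).
Proof.
case/andP=> Hp /eqP Hl; case/andP=> Hq /eqP Hl'.
by rewrite /walk cat_path last_cat Hl Hp Hq Hl' eqxx.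
Qed.

Lemma walk_rcons u v w p : walk h u v p -> h v w -> walk h u w (rcons p w).
Proof.
case/andP=> Hp /eqP Hl Hvw.
by rewrite /walk rcons_path last_rcons Hp Hl Hvw eqxx.
Qed.

Lemma walk_nil u : walk h u u [::].
Proof. by rewrite /walk /= eqxx. Qed.

Lemma walk1 u v : h u v -> walk h u v [:: v].
Proof. by move=> H; rewrite /walk /= H eqxx. Qed.

Lemma walk_rcons_inv u w p c : walk h u w (rcons p c) ->
  c = w /\ walk h u (last u p) p /\ h (last u p) w.
Proof.
case/andP; rewrite rcons_path last_rcons => /andP[Hp Hc] /eqP Hw.
by subst; split=> //; split=> //; rewrite /walk Hp eqxx.
Qed.

Lemma walk_cat_inv u w p q : walk h u w (p ++ q) ->
  walk h u (last u p) p /\ walk h (last u p) w q.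
Proof.
by case/andP; rewrite cat_path last_cat => /andP[Hp Hq] Hl; rewrite /walk Hp Hq Hl eqxx.
Qed.

Hypothesis hsym : symmetric h.

Lemma walk_rev u v p : walk h u v p -> walk h v u (rev (belast u p)).
Proof.
case/andP=> Hp /eqP Hl.
have Hr : path h (last u p) (rev (belast u p)).
  by rewrite rev_path (@eq_path _ _ h) // => a b /=; rewrite hsym.
rewrite /walk.
case: p Hp Hl Hr => [|z p] Hp Hl Hr; first by subst; rewrite /= eqxx.
rewrite Hl in Hr; rewrite Hr /=.
by rewrite rev_cons last_rcons eqxx.
Qed.

Lemma size_rev_belast (u : T) (p : seq T) : size (rev (belast u p)) = size p.
Proof. by rewrite size_rev size_belast. Qed.

Lemma exists_shortest u v p : walk h u v p -> exists q, shortest h u v q.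
Proof.
move: {2}(size p) (leqnn (size p)) => n; elim: n p => [|n IH] p Hs Hp.
  exists p; split=> // q _; move: Hs; rewrite leqn0 => /eqP->//.
case: (classic (exists q, walk h u v q /\ size q < size p)) => [[q [Hq Hsq]]|N].
  by apply: (IH q) => //; lia.
exists p; split=> // q Hq; rewrite leqNgt; apply/negP=> Hlt; apply: N; by exists q.
Qed.

Lemma shortest_size u v p q : shortest h u v p -> shortest h u v q -> size p = size q.
Proof. by case=> Hp Mp [Hq Mq]; apply/eqP; rewrite eqn_leq Mp // Mq. Qed.

Lemma shortest_rev u v p : shortest h u v p -> shortest h v u (rev (belast u p)).
Proof.
case=> Hp Mp; split; first exact: walk_rev.
move=> q Hq; rewrite size_rev_belast.
have := Mp _ (walk_rev Hq); by rewrite size_rev_belast.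
Qed.

Lemma shortest_prefix u v p q : shortest h u v (p ++ q) -> shortest h u (last u p) p.
Proof.
case=> H M; have [H1 H2] := walk_cat_inv H; split=> // r Hr.
have := M _ (walk_cat Hr H2); rewrite !size_cat; lia.
Qed.

Lemma shortest_suffix u v p q : shortest h u v (p ++ q) -> shortest h (last u p) v q.
Proof.
case=> H M; have [H1 H2] := walk_cat_inv H; split=> // r Hr.
have := M _ (walk_cat H1 Hr); rewrite !size_cat; lia.
Qed.

Definition dst u v n := (exists p, walk h u v p /\ size p = n) /\ (forall q, walk h u v q -> n <= size q).

Lemma dst_sym u v n : dst u v n -> dst v u n.
Proof.
case=> [[p [Hp Hs]] M]; split.
  by exists (rev (belast u p)); rewrite size_rev_belast; split=> //; apply: walk_rev.
by move=> q Hq; have := M _ (walk_rev Hq); rewrite size_rev_belast.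
Qed.

Definition ParentU a b := forall n c1 c2, dst a b n.+1 -> dst a c1 n -> dst a c2 n ->
  h c1 b -> h c2 b -> c1 = c2.

Definition Uq a b := forall p q, shortest h a b p -> shortest h a b q -> p = q.

Lemma Uq_sym a b : Uq a b -> Uq b a.
Proof.
move=> U p q Hp Hq.
have E := U _ _ (shortest_rev Hp) (shortest_rev Hq).
move: E => /(congr1 rev); rewrite !revK => E.
case: Hp => [/andP[_ /eqP Lp] _]; case: Hq => [/andP[_ /eqP Lq] _].
have : b :: p = b :: q by rewrite !(lastI b) E Lp Lq.
by case.
Qed.

Lemma Uq_step n x y : ParentU x y -> (forall c, dst x c n -> Uq x c) -> dst x y n.+1 -> Uq x y.
Proof.
move=> PU IH Hd p q Hp Hq.
have Sp : size p = n.+1 by case: Hd => [[r [Hr <-]] M]; apply: shortest_size Hp _; split.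
have Sq : size q = n.+1 by case: Hd => [[r [Hr <-]] M]; apply: shortest_size Hq _; split.
case/lastP: p Hp Sp => [|p c1] Hp Sp //; case/lastP: q Hq Sq => [|q c2] Hq Sq //.
rewrite size_rcons in Sp; rewrite size_rcons in Sq; case: Sp => Sp; case: Sq => Sq.
have [E1 [W1 H1]] := walk_rcons_inv Hp.1; have [E2 [W2 H2]] := walk_rcons_inv Hq.1.
subst c1 c2.
have D1 : dst x (last x p) n.
  split; first by exists p.
  move=> r Hr; have := Hp.2 _ (walk_rcons Hr H1); rewrite !size_rcons Sp; lia.
have D2 : dst x (last x q) n.
  split; first by exists q.
  move=> r Hr; have := Hq.2 _ (walk_rcons Hr H2); rewrite !size_rcons Sq; lia.
have E := PU _ _ _ Hd D1 D2 H1 H2.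
have Sp' : shortest h x (last x p) p by split=> //; case: D1 => _ M r Hr; rewrite Sp; apply: M.
have Sq' : shortest h x (last x q) q by split=> //; case: D2 => _ M r Hr; rewrite Sq; apply: M.
rewrite E in Sp'.
by rewrite (IH _ D2 _ _ Sp' Sq').
Qed.

Lemma geodetic_crit : (forall a b, ParentU a b \/ ParentU b a) -> geodetic h.
Proof.
move=> PU.
have Main : forall n a b, dst a b n -> Uq a b.
  elim=> [|n IH] a b Hd.
    move=> p q Hp Hq.
    have Sp : size p = 0 by case: Hd => [[r [Hr <-]] M]; apply: shortest_size Hp _; split.
    have Sq : size q = 0 by case: Hd => [[r [Hr <-]] M]; apply: shortest_size Hq _; split.
    by case: p q Hp Hq Sp Sq => [|??] [|??].
  case: (PU a b) => H.
    by apply: (Uq_step (n:=n) H _ Hd) => c; apply: IH.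
  apply: Uq_sym; apply: (Uq_step (n:=n) H _ (dst_sym Hd)).
  by move=> c; apply: IH.
move=> a b p q Hp Hq; apply: (Main (size p) a b _ p q Hp Hq).
by case: Hp => Hp M; split=> //; exists p.
Qed.

End Gen.

Section Main.
Variables (V : finType) (e : rel V).
Hypotheses (e_sym : symmetric e) (e_irr : irreflexive e).
Variable S : {set V}.
Variable k : nat.

Local Notation W := (V + subdiv_vert e S k)%type.
Local Notation h := (subdiv_rel e S k).

Lemma h_sym : symmetric h.
Proof.
case=> [x|[[[x1 y1] i1] H1]] [y|[[[x2 y2] i2] H2]] //=.
- by rewrite e_sym eq_sym.
- by rewrite (eq_sym x1) (eq_sym y1) orbC.
Qed.

Definition nv x y (H : cut_edge e S x y) (t : nat) : W :=
  if (insub t : option 'I_k) is Some o then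
    inr (exist (fun t => cut_edge e S t.1.1 t.1.2) (x, y, o) H) else inl y.

Lemma nv_lt x y (H : cut_edge e S x y) t (lt : t < k) :
  nv H t = inr (exist (fun t => cut_edge e S t.1.1 t.1.2) (x, y, Ordinal lt) H).
Proof. by rewrite /nv insubT. Qed.

Lemma nv_ge x y (H : cut_edge e S x y) t : k <= t -> nv H t = inl y.
Proof. by move=> le; rewrite /nv insubF // ltnNge le. Qed.

Definition pos x y (H : cut_edge e S x y) t : W := if t is t'.+1 then nv H t' else inl x.

Lemma cut_e x y : cut_edge e S x y -> e x y.
Proof. by case/and3P. Qed.
Lemma cut_x x y : cut_edge e S x y -> x \in S.
Proof. by case/and3P. Qed.
Lemma cut_y x y : cut_edge e S x y -> y \notin S.
Proof. by case/and3P. Qed.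

Lemma pos_step x y (H : cut_edge e S x y) t : t <= k -> h (pos H t) (pos H t.+1).
Proof.
case: t => [|t] Hk /=.
  case: (ltnP 0 k) => k0.
    by rewrite (nv_lt H k0) /= eqxx.
  by rewrite nv_ge //= (cut_e H) /=; move: k0; rewrite leqn0 => ->; rewrite orbT.
rewrite (nv_lt H Hk); case: (ltnP t.+1 k) => Hk'.
  by rewrite (nv_lt H Hk') /= !eqxx.
rewrite nv_ge //= eqxx /=.
apply/orP; right; apply/eqP; lia.
Qed.

Lemma seg_walk x y (H : cut_edge e S x y) n s : s + n <= k.+1 ->
  walk h (pos H s) (pos H (s + n)) (map (pos H) (iota s.+1 n)).
Proof.
elim: n s => [|n IH] s Hs; first by rewrite addn0; apply: walk_nil.
rewrite /= /walk /=.
have := IH s.+1; rewrite addSnnS => /(_ Hs) /andP[P L].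
by rewrite P L andbT pos_step //; lia.
Qed.

Lemma seg_any x y (H : cut_edge e S x y) s t : s <= k.+1 -> t <= k.+1 ->
  exists q, walk h (pos H s) (pos H t) q /\ size q = (t - s) + (s - t).
Proof.
move=> Hs Ht; case: (leqP s t) => st.
  exists (map (pos H) (iota s.+1 (t - s))); split; last by rewrite size_map size_iota; lia.
  by have := @seg_walk _ _ H (t - s) s; rewrite subnKC //; apply; lia.
have W1 := @seg_walk _ _ H (s - t) t; rewrite subnKC in W1; last lia.
exists (rev (belast (pos H t) (map (pos H) (iota t.+1 (s - t))))); split.
  by apply: walk_rev; [exact: h_sym| apply: W1; lia].
by rewrite size_rev_belast size_map size_iota; lia.
Qed.


Definition mkv x y (H : cut_edge e S x y) (o : 'I_k) : subdiv_vert e S k :=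
  exist (fun t => cut_edge e S t.1.1 t.1.2) (x, y, o) H.

Lemma pos_irr x y (H1 H2 : cut_edge e S x y) t : pos H1 t = pos H2 t.
Proof. by rewrite (bool_irrelevance H1 H2). Qed.

Lemma inr_eq (t1 t2 : subdiv_vert e S k) : val t1 = val t2 -> (inr t1 : W) = inr t2.
Proof. by move=> E; congr inr; apply: val_inj. Qed.

Lemma pos_of_new x y (H : cut_edge e S x y) (o : 'I_k) : (inr (mkv H o) : W) = pos H o.+1.
Proof. by case: o => o lt; rewrite /= (nv_lt H lt). Qed.

Lemma pos_mid x y (H : cut_edge e S x y) t (lt : t < k) : pos H t.+1 = inr (mkv H (Ordinal lt)).
Proof. by rewrite /= (nv_lt H lt). Qed.

Lemma pos_last x y (H : cut_edge e S x y) : pos H k.+1 = inl y.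
Proof. by rewrite /= nv_ge. Qed.

Lemma pos_inj x y (H : cut_edge e S x y) s t : s <= k.+1 -> t <= k.+1 -> pos H s = pos H t -> s = t.
Proof.
have xy : x != y by apply/eqP=> E; move: (cut_x H) (cut_y H); rewrite E => ->.
have gen : forall r, r <= k.+1 -> (pos H r = inl x -> r = 0) /\ (pos H r = inl y -> r = k.+1).
  case=> [|r] Hr; first by split=> // [[E]]; rewrite E eqxx in xy.
  case: (ltnP r k) => rk.
    by rewrite (pos_mid H rk).
  have -> : r = k by lia.
  by rewrite pos_last; split=> // [[E]]; rewrite E eqxx in xy.
move=> Hs Ht.
case: s Hs => [|s] Hs.
  by rewrite /= => E; symmetry; apply: (gen t Ht).1.
case: (ltnP s k) => sk.
  case: t Ht => [|t] Ht.
    by rewrite /= => E; apply: (gen _ Hs).1.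
  case: (ltnP t k) => tk.
    by rewrite (pos_mid H sk) (pos_mid H tk) => -[E]; rewrite E.
  have -> : t = k by lia.
  by rewrite pos_last => E; apply: (gen _ Hs).2.
have -> : s = k by lia.
by rewrite pos_last => E; symmetry; apply: (gen _ Ht).2.
Qed.

Lemma pos_cross x y w z (H : cut_edge e S x y) (H' : cut_edge e S w z) s t :
  0 < s <= k -> 0 < t <= k -> pos H s = pos H' t -> (x, y) = (w, z).
Proof.
case: s => [|s] //; case: t => [|t] //; rewrite /= => sk tk.
by rewrite (nv_lt H sk) (nv_lt H' tk) => -[-> ->].
Qed.

Lemma nbr_new x y (H : cut_edge e S x y) (o : 'I_k) c :
  h (inr (mkv H o)) c -> c = pos H o \/ c = pos H o.+2.
Proof.
case: c => [z|[[[x2 y2] o2] H2]] /=.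
  case/orP=> /andP[/eqP -> /eqP Ho].
    by left; rewrite Ho.
  right; rewrite /= nv_ge //; have := ltn_ord o; lia.
case/and3P=> /eqP E1 /eqP E2 /orP[] /eqP Ho; subst x2 y2.
  right; have lt : o.+1 < k by rewrite Ho.
  apply: eq_trans (esym (pos_mid H lt)); apply: inr_eq => /=; congr (_, _, _); exact: val_inj.
left; apply: eq_trans (pos_of_new H2 o2) _; rewrite -Ho; exact: pos_irr.
Qed.

Lemma nbr_old v c : h (inl v) c ->
  (exists z, c = inl z /\ e v z /\ (((v \in S) == (z \in S)) \/ k = 0)) \/
  (0 < k /\ exists y (H : cut_edge e S v y), c = pos H 1) \/
  (0 < k /\ exists x (H : cut_edge e S x v), c = pos H k).
Proof.
case: c => [z|[[[x y] o] H]] /=.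
  case/andP=> E /orP[] Hs; left; exists z; split=> //; split=> //.
    by left.
  by right; apply/eqP.
have k0 : 0 < k by have := ltn_ord o; lia.
case/orP=> /andP[/eqP Ev /eqP Ho]; subst v; right.
  left; split=> //; exists y, H.
  have E : o = Ordinal k0 by apply: val_inj.
  by rewrite (pos_of_new H o) E.
right; split=> //; exists x, H.
have E : o.+1 = k by lia.
by rewrite (pos_of_new H o) E.
Qed.


Definition sig (a v : V) : nat := if (a \in S) == (v \in S) then 0 else k.

Lemma sig_le a v : sig a v <= k.
Proof. by rewrite /sig; case: ifP. Qed.

Lemma sig_same a z z' : (z \in S) == (z' \in S) -> sig a z = sig a z'.
Proof. by rewrite /sig => /eqP ->. Qed.

Lemma sig_k0 a v : k = 0 -> sig a v = 0.
Proof. by rewrite /sig => ->; case: ifP. Qed.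

Lemma sig_aa a : sig a a = 0.
Proof. by rewrite /sig eqxx. Qed.

Definition Pot (a : V) (b : W) (n : nat) : Prop :=
  match b with
  | inl v => exists p, walk e a v p /\ size p + sig a v <= n
  | inr t => match val t with (x, y, i) =>
      (exists p, walk e a x p /\ size p + sig a x + i.+1 <= n) \/
      (exists p, walk e a y p /\ size p + sig a y + (k - i) <= n) end
  end.

Lemma Pot_mono a b n m : Pot a b n -> n <= m -> Pot a b m.
Proof.
case: b => [v|[[[x y] i] H]] /=.
  by case=> p [Wp Sp] nm; exists p; split=> //; lia.
by case=> [[p [Wp Sp]]|[p [Wp Sp]]] nm; [left|right]; exists p; split=> //; lia.
Qed.

Lemma Pot_step a b c n : Pot a b n -> h b c -> Pot a c n.+1.
Proof.
case: b => [z|[[[x y] i] H]]; case: c => [z'|[[[x' y'] i'] H']] /=.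
- case=> p [Wp Sp] /andP[E Hs]; exists (rcons p z'); split; first exact: walk_rcons Wp E.
  rewrite size_rcons; case/orP: Hs => [Hs|/eqP k0].
    by rewrite -(sig_same a Hs); lia.
  by rewrite !sig_k0 // in Sp *; lia.
- case=> p [Wp Sp]; case/orP=> /andP[/eqP E /eqP Hi]; subst z.
    by left; exists p; split=> //; rewrite Hi; lia.
  by right; exists p; split=> //; have := ltn_ord i'; lia.
- have Hxy := cut_e H; have Hyx : e y x by rewrite e_sym.
  have sx := sig_le a x; have sy := sig_le a y.
  case=> [[p [Wp Sp]]|[p [Wp Sp]]]; case/orP=> /andP[/eqP E /eqP Hi]; subst z'.
  + by exists p; split=> //; lia.
  + exists (rcons p y); split; first exact: walk_rcons Wp Hxy.
    by rewrite size_rcons; have := ltn_ord i; lia.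
  + exists (rcons p x); split; first exact: walk_rcons Wp Hyx.
    by rewrite size_rcons; lia.
  + by exists p; split=> //; have := ltn_ord i; lia.
- move=> P /and3P[/eqP E1 /eqP E2 Hi]; subst x' y'.
  have li := ltn_ord i; have li' := ltn_ord i'.
  case: P => [[p [Wp Sp]]|[p [Wp Sp]]]; [left|right]; exists p; split=> //;
  case/orP: Hi => /eqP Hi; lia.
Qed.

Lemma Pot_path a b q n : Pot a b n -> path h b q -> Pot a (last b q) (n + size q).
Proof.
elim: q b n => [|c q IH] b n P /=; first by rewrite addn0.
case/andP=> Hbc Hq; rewrite -addSnnS; apply: IH Hq; exact: Pot_step P Hbc.
Qed.

Lemma Pot_walk a b q : walk h (inl a) b q -> Pot a b (size q).
Proof.
case/andP=> Hq /eqP <-; rewrite -[size q]add0n; apply: Pot_path Hq.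
by exists [::]; split; [exact: walk_nil| rewrite sig_aa].
Qed.

Lemma Pot_pos a x y (H : cut_edge e S x y) t n : t <= k.+1 -> Pot a (pos H t) n ->
  (exists p, walk e a x p /\ size p + sig a x + t <= n) \/
  (exists p, walk e a y p /\ size p + sig a y + (k.+1 - t) <= n).
Proof.
case: t => [|t] Ht.
  by case=> p [Wp Sp]; left; exists p; split=> //; lia.
case: (ltnP t k) => tk.
  rewrite (pos_mid H tk) /=.
  by case=> [[p [Wp Sp]]|[p [Wp Sp]]]; [left|right]; exists p; split=> //; lia.
have E : t = k by lia.
subst t; rewrite pos_last /=.
by case=> p [Wp Sp]; right; exists p; split=> //; lia.
Qed.


Lemma lift_path p u : path e u p -> all (fun z => (z \in S) == (u \in S)) p ->
  path h (inl u) (map inl p).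
Proof.
elim: p u => [|z p IH] u //= /andP[Euz Hp] /andP[Hz Hall].
rewrite Euz eq_sym Hz /=; apply: IH => //.
by apply/allP=> w /(allP Hall) /eqP ->; rewrite eq_sym.
Qed.

Lemma lift_walk u v p : walk e u v p -> all (fun z => (z \in S) == (u \in S)) p ->
  walk h (inl u) (inl v) (map inl p).
Proof.
case/andP=> Hp /eqP Hl Hall; rewrite /walk lift_path //=; by rewrite (last_map (@inl V (subdiv_vert e S k))) Hl.
Qed.

Lemma split_first p u : path e u p -> (last u p \in S) != (u \in S) ->
  exists p1 z p2, p = p1 ++ z :: p2 /\ all (fun w => (w \in S) == (u \in S)) p1 /\
                  (z \in S) != (u \in S).
Proof.
elim: p u => [|z p IH] u /=; first by rewrite eqxx.
case/andP=> _ Hp Hl.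
case: (boolP ((z \in S) == (u \in S))) => Hz; last by exists [::], z, p.
have Hl' : (last z p \in S) != (z \in S) by rewrite (eqP Hz).
have [p1 [z' [p2 [E [A N]]]]] := IH z Hp Hl'.
exists (z :: p1), z', p2; rewrite E; split=> //; split; last by rewrite -(eqP Hz).
by rewrite /= Hz; apply/allP=> w /(allP A) /eqP ->; rewrite (eqP Hz).
Qed.

Lemma all_last (P : pred V) a p : all P (a :: p) -> P (last a p).
Proof. by move/allP; apply; exact: mem_last. Qed.

Lemma cross_walk x z : e x z -> (x \in S) != (z \in S) ->
  exists q, walk h (inl x) (inl z) q /\ size q = k.+1.
Proof.
move=> Exz; case: (boolP (x \in S)) => Hx Hz.
  have H : cut_edge e S x z by rewrite /cut_edge Hx Exz andbT; move: Hz; case: (z \in S).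
  exists (map (pos H) (iota 1 k.+1)); split; last by rewrite size_map size_iota.
  by have := @seg_walk _ _ H k.+1 0 (leqnn _); rewrite add0n pos_last.
have Hz' : z \in S by move: Hz; case: (z \in S).
have H : cut_edge e S z x by rewrite /cut_edge Hz' Hx e_sym Exz.
have W0 := @seg_walk _ _ H k.+1 0 (leqnn _); rewrite add0n pos_last in W0.
exists (rev (belast (inl z) (map (pos H) (iota 1 k.+1)))); split.
  exact (walk_rev h_sym W0).
by rewrite size_rev_belast size_map size_iota.
Qed.

Hypotheses (HS : geod_closed e S) (HT : geod_closed e (~: S)).

Lemma closed_side a v p : shortest e a v p -> (a \in S) == (v \in S) ->
  all (fun z => (z \in S) == (a \in S)) (a :: p).
Proof.
move=> Sp; case: (boolP (a \in S)) => Ha Hv.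
  have Hv' : v \in S by rewrite -(eqP Hv).
  by have := HS Ha Hv' Sp; apply: sub_all => z /= ->.
have Ha' : a \in ~: S by rewrite in_setC.
have Hv' : v \in ~: S by rewrite in_setC -(eqP Hv).
by have := HT Ha' Hv' Sp; apply: sub_all => z /=; rewrite in_setC => /negbTE ->.
Qed.

Lemma UB a v p : shortest e a v p ->
  exists q, walk h (inl a) (inl v) q /\ size q = size p + sig a v.
Proof.
move=> Sp; rewrite /sig; case: ifP => Hav.
  exists (map inl p); split; last by rewrite size_map addn0.
  have /andP[_ A] := closed_side Sp Hav.
  by apply: lift_walk => //; case: Sp.
have [/andP[Pp /eqP Lp] M] := Sp.
have Hl' : (last a p \in S) != (a \in S) by rewrite Lp eq_sym Hav.
have [p1 [z [p2 [E [A N]]]]] := split_first Pp Hl'.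
subst p.
have Hx : (last a p1 \in S) == (a \in S) by apply: (all_last (P := fun w => (w \in S) == (a \in S))); rewrite /= eqxx.
move: Pp; rewrite cat_path => /andP[P1 /= /andP[Exz P2]].
have Sp2 : shortest e z v p2.
  by move: Sp; rewrite -cat_rcons => /shortest_suffix; rewrite last_rcons.
have Hzv : (z \in S) == (v \in S).
  by move: N Hav; case: (z \in S); case: (a \in S); case: (v \in S).
have /andP[_ A2] := closed_side Sp2 Hzv.
have Nx : (last a p1 \in S) != (z \in S) by rewrite (eqP Hx); move: N; case: (z \in S); case: (a \in S).
have [q [Wq Sq]] := cross_walk Exz Nx.
exists (map inl p1 ++ q ++ map inl p2); split.
  apply: walk_cat; first by apply: lift_walk => //; apply/andP.
  apply: walk_cat Wq _; apply: lift_walk => //; by case: Sp2.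
by rewrite !size_cat !size_map Sq /=; lia.
Qed.


Lemma UB_pos a x y (H : cut_edge e S x y) t sx sy : t <= k.+1 ->
  shortest e a x sx -> shortest e a y sy ->
  (exists q, walk h (inl a) (pos H t) q /\ size q = size sx + sig a x + t) /\
  (exists q, walk h (inl a) (pos H t) q /\ size q = size sy + sig a y + (k.+1 - t)).
Proof.
move=> Ht Sx Sy; split.
  have [q1 [W1 S1]] := UB Sx.
  have [q2 [W2 S2]] := seg_any H (leq0n k.+1) Ht.
  exists (q1 ++ q2); split; first exact: walk_cat W1 W2.
  by rewrite size_cat S1 S2; lia.
have [q1 [W1 S1]] := UB Sy.
have [q2 [W2 S2]] := seg_any H (leqnn k.+1) Ht.
rewrite pos_last in W2.
exists (q1 ++ q2); split; first exact: walk_cat W1 W2.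
by rewrite size_cat S1 S2; lia.
Qed.

Lemma reach_pos a x y (H : cut_edge e S x y) t n : t <= k.+1 ->
  dst h (inl a) (pos H t) n -> exists sx sy, shortest e a x sx /\ shortest e a y sy.
Proof.
move=> Ht [[q [Wq Sq]] _].
have Hxy := cut_e H; have Hyx : e y x by rewrite e_sym.
case: (Pot_pos Ht (Pot_walk Wq)) => [[p [Wp _]]|[p [Wp _]]].
  have [sx Sx] := exists_shortest Wp.
  have [sy Sy] := exists_shortest (walk_rcons Wp Hxy).
  by exists sx, sy.
have [sx Sx] := exists_shortest (walk_rcons Wp Hyx).
have [sy Sy] := exists_shortest Wp.
by exists sx, sy.
Qed.

Lemma LB_pos a x y (H : cut_edge e S x y) t n sx sy : t <= k.+1 ->
  shortest e a x sx -> shortest e a y sy -> dst h (inl a) (pos H t) n ->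
  size sx + sig a x + t <= n \/ size sy + sig a y + (k.+1 - t) <= n.
Proof.
move=> Ht [_ Mx] [_ My] [[q [Wq Sq]] _].
case: (Pot_pos Ht (Pot_walk Wq)) => [[p [Wp Sp]]|[p [Wp Sp]]].
  by left; have := Mx _ Wp; lia.
by right; have := My _ Wp; lia.
Qed.

Lemma UBd_pos a x y (H : cut_edge e S x y) t n sx sy : t <= k.+1 ->
  shortest e a x sx -> shortest e a y sy -> dst h (inl a) (pos H t) n ->
  n <= size sx + sig a x + t /\ n <= size sy + sig a y + (k.+1 - t).
Proof.
move=> Ht Sx Sy [_ M].
have [[q1 [W1 S1]] [q2 [W2 S2]]] := UB_pos H Ht Sx Sy.
by split; [rewrite -S1|rewrite -S2]; apply: M.
Qed.

Lemma no_detour a u w pu pw : shortest e a u pu -> shortest e a w pw -> e u w ->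
  (u \in S) != (w \in S) -> (a \in S) == (w \in S) -> size pw <> (size pu).+1.
Proof.
move=> [Wu _] [Ww Mw] Euw N Aw Es.
have Sr : shortest e a w (rcons pu w).
  split; first exact: walk_rcons Wu Euw.
  by move=> q Wq; rewrite size_rcons -Es; apply: Mw.
have A := closed_side Sr Aw.
have : (u \in S) == (a \in S).
  case/andP: Wu => _ /eqP <-.
  by apply: (allP A); rewrite -cats1 -cat_cons mem_cat mem_last.
by rewrite (eqP Aw) (negbTE N).
Qed.

Lemma sigS a v : a \in S -> sig a v = if v \in S then 0 else k.
Proof. by rewrite /sig => ->; case: (v \in S). Qed.
Lemma sigT a v : a \notin S -> sig a v = if v \in S then k else 0.
Proof. by rewrite /sig => /negbTE ->; case: (v \in S). Qed.

Lemma tie_old a x y (H : cut_edge e S x y) o n : o < k ->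
  dst h (inl a) (pos H o.+1) n.+1 -> dst h (inl a) (pos H o) n ->
  dst h (inl a) (pos H o.+2) n -> False.
Proof.
move=> ok Db D1 D2.
have o0 : o <= k.+1 by lia.
have o1 : o.+1 <= k.+1 by lia.
have o2 : o.+2 <= k.+1 by lia.
have [sx [sy [Sx Sy]]] := reach_pos o1 Db.
have [U1 U2] := UBd_pos o1 Sx Sy Db.
have L1 := LB_pos o0 Sx Sy D1.
have L2 := LB_pos o2 Sx Sy D2.
have Hx := cut_x H; have Hy := cut_y H; have Hxy := cut_e H; have Hyx : e y x by rewrite e_sym.
have T1 : size sx <= (size sy).+1 by case: Sx => _ M; have := M _ (walk_rcons Sy.1 Hyx); rewrite size_rcons.
have T2 : size sy <= (size sx).+1 by case: Sy => _ M; have := M _ (walk_rcons Sx.1 Hxy); rewrite size_rcons.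
have Nxy : (y \in S) != (x \in S) by rewrite Hx (negbTE Hy).
have Nyx : (x \in S) != (y \in S) by rewrite Hx (negbTE Hy).
case: (boolP (a \in S)) => Ha.
  have Ax : (a \in S) == (x \in S) by rewrite Ha Hx.
  have ND := no_detour Sy Sx Hyx Nxy Ax.
  rewrite !sigS // Hx (negbTE Hy) in U1 U2 L1 L2.
  lia.
have Ay : (a \in S) == (y \in S) by rewrite (negbTE Ha) (negbTE Hy).
have ND := no_detour Sx Sy Hxy Nyx Ay.
rewrite !sigT // Hx (negbTE Hy) in U1 U2 L1 L2.
lia.
Qed.


Lemma PU_old_new a t : ParentU h (inl a) (inr t).
Proof.
case: t => [[[x y] o] H] n c1 c2 Db D1 D2 H1 H2.
rewrite h_sym in H1; rewrite h_sym in H2.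
have N1 := nbr_new H1; have N2 := nbr_new H2.
have E := pos_of_new H o; rewrite /mkv in E; rewrite E in Db.
have ok := ltn_ord o.
case: N1 => E1; case: N2 => E2; subst c1 c2 => //.
  by case: (tie_old ok Db D1 D2).
by case: (tie_old ok Db D2 D1).
Qed.

Hypothesis Hgeo : geodetic e.

Lemma par_eq a v sv g1 g2 p1 p2 : shortest e a v sv ->
  walk e a g1 p1 -> e g1 v -> size p1 < size sv ->
  walk e a g2 p2 -> e g2 v -> size p2 < size sv -> g1 = g2.
Proof.
move=> [Wv Mv] W1 E1 S1 W2 E2 S2.
have R1 : shortest e a v (rcons p1 v).
  split; first exact: walk_rcons W1 E1.
  by move=> q Wq; have := Mv _ Wq; rewrite size_rcons; lia.
have R2 : shortest e a v (rcons p2 v).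
  split; first exact: walk_rcons W2 E2.
  by move=> q Wq; have := Mv _ Wq; rewrite size_rcons; lia.
have E0 := Hgeo R1 R2.
have E : p1 = p2 by move/rcons_inj: E0 => [].
by case/andP: W1 => _ /eqP <-; case/andP: W2 => _ /eqP <-; rewrite E.
Qed.

Lemma gpar a v sv c n : shortest e a v sv -> n.+1 <= size sv + sig a v ->
  dst h (inl a) c n -> h c (inl v) ->
  exists g pg, walk e a g pg /\ e g v /\ size pg < size sv /\
    ((c = inl g /\ (((g \in S) == (v \in S)) \/ k = 0)) \/
     (0 < k /\ (g \in S) != (v \in S) /\
       ((exists H : cut_edge e S v g, c = pos H 1) \/ (exists H : cut_edge e S g v, c = pos H k)))).
Proof.
move=> Sv Ub Dc Hc; rewrite h_sym in Hc.
case: (nbr_old Hc) => [[z [Ez [Evz Hs]]]|[[k0 [y [H Ec]]]|[k0 [x [H Ec]]]]].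
- subst c; case: Dc => [[q [Wq Sq]] _].
  have [pz [Wz Sz]] := Pot_walk Wq.
  have Es : sig a z = sig a v by case: Hs => [Hs|k0]; [rewrite (sig_same a Hs)|rewrite !sig_k0].
  exists z, pz; split=> //; split; first by rewrite e_sym.
  split; first by lia.
  by left; split=> //; case: Hs => [Hs|->]; [left; rewrite eq_sym|right].
- subst c.
  have Hxy := cut_e H; have Hyx : e y v by rewrite e_sym.
  have [sy Sy] := exists_shortest (walk_rcons Sv.1 Hxy).
  have L := LB_pos (t := 1) (ltnW (ltn0Sn k)) Sv Sy Dc.
  have Hv := cut_x H; have Hy := cut_y H.
  have T : size sv <= (size sy).+1.
    by case: Sv => _ M; have := M _ (walk_rcons Sy.1 Hyx); rewrite size_rcons.
  case: (boolP (a \in S)) => Ha.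
    by rewrite !sigS // Hv (negbTE Hy) in L Ub; lia.
  rewrite !sigT // Hv (negbTE Hy) in L Ub.
  exists y, sy; split; first exact: Sy.1.
  split=> //; split; first by lia.
  right; split=> //; split; first by rewrite Hv (negbTE Hy).
  by left; exists H.
- subst c.
  have Hxy := cut_e H; have Hvx : e v x by rewrite e_sym.
  have [sx Sx] := exists_shortest (walk_rcons Sv.1 Hvx).
  have L := LB_pos (t := k) (leqnSn k) Sx Sv Dc.
  have Hx := cut_x H; have Hv := cut_y H.
  have T : size sv <= (size sx).+1.
    by case: Sv => _ M; have := M _ (walk_rcons Sx.1 Hxy); rewrite size_rcons.
  case: (boolP (a \in S)) => Ha; last first.
    by rewrite !sigT // Hx (negbTE Hv) in L Ub; lia.
  rewrite !sigS // Hx (negbTE Hv) in L Ub.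
  exists x, sx; split; first exact: Sx.1.
  split=> //; split; first by lia.
  right; split=> //; split; first by rewrite Hx (negbTE Hv).
  by right; exists H.
Qed.



Lemma PU_old_old a v : ParentU h (inl a) (inl v).
Proof.
move=> n c1 c2 Db D1 D2 H1 H2.
have [sv Sv] : exists sv, shortest e a v sv.
  case: Db => [[q [Wq _]] _]; have [p [Wp _]] := Pot_walk Wq.
  exact: exists_shortest Wp.
have Ub : n.+1 <= size sv + sig a v.
  by have [q [Wq Sq]] := UB Sv; rewrite -Sq; apply: Db.2.
have [g1 [p1 [W1 [E1 [S1 T1]]]]] := gpar Sv Ub D1 H1.
have [g2 [p2 [W2 [E2 [S2 T2]]]]] := gpar Sv Ub D2 H2.
have Eg := par_eq Sv W1 E1 S1 W2 E2 S2; subst g2.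
case: T1 => [[-> Hs1]|[k0 [N1 C1]]]; case: T2 => [[-> Hs2]|[k0' [N2 C2]]] //.
- by exfalso; case: Hs1 => [Hs|kz]; [rewrite Hs in N2|lia].
- by exfalso; case: Hs2 => [Hs|kz]; [rewrite Hs in N1|lia].
case: C1 => [[H E]|[H E]]; case: C2 => [[H' E']|[H' E']]; subst c1 c2.
- exact: pos_irr.
- by move: (cut_x H) (cut_y H') => ->.
- by move: (cut_x H') (cut_y H) => ->.
- exact: pos_irr.
Qed.


Definition Q x y (H : cut_edge e S x y) i (b : W) (n : nat) : Prop :=
  (exists t, t <= k.+1 /\ b = pos H t /\ i.+1 <= t + n /\ t <= i.+1 + n) \/
  (exists m, Pot x b m /\ i.+1 + m <= n) \/
  (exists m, Pot y b m /\ k - i + m <= n).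

Lemma Pot_self x : Pot x (inl x) 0.
Proof. by exists [::]; split; [exact: walk_nil|rewrite sig_aa]. Qed.

Lemma Q_step x y (H : cut_edge e S x y) i b c n : i < k -> Q H i b n -> h b c -> Q H i c n.+1.
Proof.
move=> ik [[t [Ht [Eb [L1 L2]]]]|[[m [P L]]|[m [P L]]]] Hbc; last first.
- by right; right; exists m.+1; split; [exact: Pot_step P Hbc|lia].
- by right; left; exists m.+1; split; [exact: Pot_step P Hbc|lia].
subst b; case: t Ht L1 L2 Hbc => [|t] Ht L1 L2 Hbc.
  by right; left; exists 1; split; [exact: Pot_step (Pot_self x) Hbc|lia].
case: (ltnP t k) => tk.
  rewrite (pos_mid H tk) in Hbc; case: (nbr_new Hbc) => ->.
    by left; exists t; split; [lia|split=> //; lia].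
  by left; exists t.+2; split; [lia|split=> //; lia].
have Et : t = k by lia.
subst t; rewrite pos_last in Hbc.
by right; right; exists 1; split; [exact: Pot_step (Pot_self y) Hbc|lia].
Qed.

Lemma Q_path x y (H : cut_edge e S x y) i q : i < k -> forall b0 n0, path h b0 q ->
  Q H i b0 n0 -> Q H i (last b0 q) (n0 + size q).
Proof.
move=> ik; elim: q => [|c q IH] b0 n0 /=; first by move=> _ Q0; rewrite addn0.
case/andP=> Hc Hq Qb; rewrite addnS -addSn; apply: IH Hq _.
exact: Q_step ik Qb Hc.
Qed.

Lemma Q_walk x y (H : cut_edge e S x y) i b q : i < k -> walk h (pos H i.+1) b q -> Q H i b (size q).
Proof.
move=> ik /andP[Hq /eqP <-].
have Q0 : Q H i (pos H i.+1) 0 by left; exists i.+1; split; [lia|split=> //; lia].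
by have := Q_path ik Hq Q0; rewrite add0n.
Qed.

Lemma pos_old x y (H : cut_edge e S x y) t v : t <= k.+1 -> pos H t = inl v ->
  (t = 0 /\ v = x) \/ (t = k.+1 /\ v = y).
Proof.
case: t => [|t] Ht; first by case=> ->; left.
case: (ltnP t k) => tk; first by rewrite (pos_mid H tk).
have Et : t = k by lia.
by subst t; rewrite pos_last => -[->]; right.
Qed.

Lemma Q_norm x y (H : cut_edge e S x y) i b n : Q H i b n ->
  (forall t, 0 < t <= k -> b <> pos H t) ->
  (exists m, Pot x b m /\ i.+1 + m <= n) \/ (exists m, Pot y b m /\ k - i + m <= n).
Proof.
case=> [[t [Ht [Eb [L1 L2]]]]|//] N.
case: b Eb N => [v|tb] Eb N.
  case: (pos_old Ht (esym Eb)) => [[Et Ev]|[Et Ev]]; subst.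
    by left; exists 0; split; [exact: Pot_self|lia].
  by right; exists 0; split; [exact: Pot_self|lia].
exfalso; have Hn : 0 < t <= k.
  case: t Ht L1 L2 Eb => [|t] Ht _ _ Eb //.
  case: (ltnP t k) => tk //.
  have Et : t = k by lia.
  by subst t; rewrite pos_last in Eb.
exact: N Hn Eb.
Qed.


Lemma LBQ_same x y (H : cut_edge e S x y) i t n : t <= k.+1 -> Q H i (pos H t) n ->
  (i.+1 <= t + n /\ t <= i.+1 + n) \/ i.+1 + t <= n \/ i.+1 + k + (k.+1 - t) <= n \/
  k - i + k + t <= n \/ k - i + (k.+1 - t) <= n.
Proof.
move=> Ht; have Hx := cut_x H; have Hy := cut_y H.
have sxy : sig x y = k by rewrite sigS // (negbTE Hy).
have syx : sig y x = k by rewrite sigT // Hx.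
case=> [[t0 [Ht0 [E [L1 L2]]]]|[[m [P L]]|[m [P L]]]].
- by have := pos_inj Ht Ht0 E => ->; left.
- case: (Pot_pos Ht P) => [[p [_ Sp]]|[p [_ Sp]]]; rewrite ?sig_aa ?sxy in Sp; right; lia.
- case: (Pot_pos Ht P) => [[p [_ Sp]]|[p [_ Sp]]]; rewrite ?sig_aa ?syx in Sp; right; lia.
Qed.

Lemma tie_same x y (H : cut_edge e S x y) i j n : i < k -> j < k ->
  dst h (pos H i.+1) (pos H j.+1) n.+1 -> dst h (pos H i.+1) (pos H j) n ->
  dst h (pos H i.+1) (pos H j.+2) n -> False.
Proof.
move=> ik jk Db [[q1 [W1 S1]] _] [[q2 [W2 S2]] _].
have i1 : i.+1 <= k.+1 by lia.
have j0 : j <= k.+1 by lia.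
have j1 : j.+1 <= k.+1 by lia.
have [q [Wq Sq]] := seg_any H i1 j1.
have U := Db.2 _ Wq; rewrite Sq in U.
have L1 := LBQ_same j0 (Q_walk ik W1).
have j2 : j.+2 <= k.+1 by lia.
have L2 := LBQ_same j2 (Q_walk ik W2).
rewrite S1 in L1; rewrite S2 in L2.
lia.
Qed.


Lemma pos_diff x y w z (H : cut_edge e S x y) (H' : cut_edge e S w z) t t0 :
  (x, y) != (w, z) -> t <= k.+1 -> 0 < t0 <= k -> pos H' t <> pos H t0.
Proof.
move=> N Ht Ht0 E.
case: (ltnP 0 t) => t0'.
  case: (ltnP k t) => tk.
    have Et : t = k.+1 by lia.
    subst t; rewrite pos_last in E.
    case: t0 Ht0 E => [|t0] // /andP[_ Ht0]; by rewrite (pos_mid H Ht0).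
  have tt : 0 < t <= k by lia.
  by have := pos_cross Ht0 tt (esym E) => Exy; rewrite Exy eqxx in N.
have Et : t = 0 by lia.
subst t; case: t0 Ht0 E => [|t0] // /andP[_ Ht0]; by rewrite /= (nv_lt H Ht0).
Qed.

Lemma connect4 x y w z : e x y -> e w z ->
  ((exists p, walk e x w p) \/ (exists p, walk e x z p) \/ (exists p, walk e y w p) \/ (exists p, walk e y z p)) ->
  exists sxw sxz syw syz, [/\ shortest e x w sxw, shortest e x z sxz, shortest e y w syw & shortest e y z syz].
Proof.
move=> Exy Ewz Hw.
have Eyx : e y x by rewrite e_sym.
have Ezw : e z w by rewrite e_sym.
have [p Wp] : exists p, walk e x w p.
  case: Hw => [//|[[p Wp]|[[p Wp]|[p Wp]]]].
  - by exists (rcons p w); apply: walk_rcons Wp Ezw.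
  - by exists (y :: p); apply: (walk_cat (p := [:: y]) (walk1 Exy) Wp).
  - by exists (y :: rcons p w); apply: (walk_cat (p := [:: y]) (walk1 Exy)); apply: walk_rcons Wp Ezw.
have [sxw S1] := exists_shortest Wp.
have [sxz S2] := exists_shortest (walk_rcons Wp Ewz).
have [syw S3] := exists_shortest (walk_cat (p := [:: x]) (walk1 Eyx) Wp).
have [syz S4] := exists_shortest (walk_cat (p := [:: x]) (walk1 Eyx) (walk_rcons Wp Ewz)).
by exists sxw, sxz, syw, syz.
Qed.

Lemma LBQ_diff x y w z (H : cut_edge e S x y) (H' : cut_edge e S w z) i t n sxw sxz syw syz :
  (x, y) != (w, z) -> t <= k.+1 ->
  shortest e x w sxw -> shortest e x z sxz -> shortest e y w syw -> shortest e y z syz ->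
  Q H i (pos H' t) n ->
  i.+1 + size sxw + t <= n \/ i.+1 + size sxz + k + (k.+1 - t) <= n \/
  k - i + size syw + k + t <= n \/ k - i + size syz + (k.+1 - t) <= n.
Proof.
move=> N Ht [_ M1] [_ M2] [_ M3] [_ M4] Qb.
have Hx := cut_x H; have Hy := cut_y H; have Hw := cut_x H'; have Hz := cut_y H'.
have gxw : sig x w = 0 by rewrite sigS // Hw.
have gxz : sig x z = k by rewrite sigS // (negbTE Hz).
have gyw : sig y w = k by rewrite sigT // Hw.
have gyz : sig y z = 0 by rewrite sigT // (negbTE Hz).
have NN : forall t0, 0 < t0 <= k -> pos H' t <> pos H t0 by move=> t0 Ht0; apply: pos_diff.
case: (Q_norm Qb NN) => [[m [P L]]|[m [P L]]].
  case: (Pot_pos Ht P) => [[p [Wp Sp]]|[p [Wp Sp]]].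
    by have := M1 _ Wp; rewrite gxw in Sp; lia.
  by have := M2 _ Wp; rewrite gxz in Sp; lia.
case: (Pot_pos Ht P) => [[p [Wp Sp]]|[p [Wp Sp]]].
  by have := M3 _ Wp; rewrite gyw in Sp; lia.
by have := M4 _ Wp; rewrite gyz in Sp; lia.
Qed.

Lemma UBQ_diff x y w z (H : cut_edge e S x y) (H' : cut_edge e S w z) i t n sxw sxz syw syz :
  i < k -> t <= k.+1 ->
  shortest e x w sxw -> shortest e x z sxz -> shortest e y w syw -> shortest e y z syz ->
  dst h (pos H i.+1) (pos H' t) n ->
  [/\ n <= i.+1 + size sxw + t, n <= i.+1 + size sxz + k + (k.+1 - t),
      n <= k - i + size syw + k + t & n <= k - i + size syz + (k.+1 - t)].
Proof.
move=> ik Ht S1 S2 S3 S4 [_ M].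
have Hx := cut_x H; have Hy := cut_y H; have Hw := cut_x H'; have Hz := cut_y H'.
have gxw : sig x w = 0 by rewrite sigS // Hw.
have gxz : sig x z = k by rewrite sigS // (negbTE Hz).
have gyw : sig y w = k by rewrite sigT // Hw.
have gyz : sig y z = 0 by rewrite sigT // (negbTE Hz).
have i1 : i.+1 <= k.+1 by lia.
have [qx [Wx Sx]] := seg_any H i1 (leq0n k.+1).
have [qy [Wy Sy]] := seg_any H i1 (leqnn k.+1).
rewrite pos_last in Wy.
have [[q1 [W1 Q1]] [q2 [W2 Q2]]] := UB_pos H' Ht S1 S2.
have [[q3 [W3 Q3]] [q4 [W4 Q4]]] := UB_pos H' Ht S3 S4.
have := M _ (walk_cat Wx W1); have := M _ (walk_cat Wx W2).
have := M _ (walk_cat Wy W3); have := M _ (walk_cat Wy W4).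
rewrite !size_cat Sx Sy Q1 Q2 Q3 Q4 gxw gxz gyw gyz.
move=> A1 A2 A3 A4; split; [move: A4|move: A3|move: A2|move: A1]; clear -ik Ht; lia.
Qed.


Lemma triR a b c p q : shortest e a b p -> shortest e a c q -> e c b -> size p <= (size q).+1.
Proof. by move=> [_ M] [Wq _] Ecb; have := M _ (walk_rcons Wq Ecb); rewrite size_rcons. Qed.

Lemma triL a b c p q : shortest e a c p -> shortest e b c q -> e a b -> size p <= (size q).+1.
Proof. by move=> [_ M] [Wq _] Eab; have := M _ (walk_cat (p := [:: b]) (walk1 Eab) Wq). Qed.

Hypothesis Hodd : forall u v w x : V, cut_edge e S u v -> cut_edge e S w x ->
          (u, v) != (w, x) ->
          forall n m, is_dist e u w n -> is_dist e v x m -> odd (n + m).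

Lemma tie_diff x y w z (H : cut_edge e S x y) (H' : cut_edge e S w z) i j n :
  (x, y) != (w, z) -> i < k -> j < k ->
  dst h (pos H i.+1) (pos H' j.+1) n.+1 -> dst h (pos H i.+1) (pos H' j) n ->
  dst h (pos H i.+1) (pos H' j.+2) n -> False.
Proof.
move=> N ik jk Db [[q1 [W1 S1]] _] [[q2 [W2 S2]] _].
have j0 : j <= k.+1 by lia.
have j1 : j.+1 <= k.+1 by lia.
have j2 : j.+2 <= k.+1 by lia.
have Hx := cut_x H; have Hy := cut_y H; have Hw := cut_x H'; have Hz := cut_y H'.
have Exy := cut_e H; have Ewz := cut_e H'.
have Eyx : e y x by rewrite e_sym.
have Ezw : e z w by rewrite e_sym.
have [sxw [sxz [syw [syz [Sxw Sxz Syw Syz]]]]] : exists sxw sxz syw syz,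
    [/\ shortest e x w sxw, shortest e x z sxz, shortest e y w syw & shortest e y z syz].
  apply: connect4 => //.
  case: Db => [[qb [Wb _]] _].
  have NN : forall t0, 0 < t0 <= k -> pos H' j.+1 <> pos H t0 by move=> t0 Ht0; apply: pos_diff.
  case: (Q_norm (Q_walk ik Wb) NN) => [[m [P _]]|[m [P _]]];
  case: (Pot_pos j1 P) => [[p [Wp _]]|[p [Wp _]]].
  - by left; exists p.
  - by right; left; exists p.
  - by right; right; left; exists p.
  - by right; right; right; exists p.
have [U1 U2 U3 U4] := UBQ_diff ik j1 Sxw Sxz Syw Syz Db.
have L1 := LBQ_diff N j0 Sxw Sxz Syw Syz (Q_walk ik W1).
have L2 := LBQ_diff N j2 Sxw Sxz Syw Syz (Q_walk ik W2).
rewrite S1 in L1; rewrite S2 in L2.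
have T1 := triR Sxw Sxz Ezw.
have T2 := triR Sxz Sxw Ewz.
have T3 := triR Syw Syz Ezw.
have T4 := triR Syz Syw Ewz.
have T5 := triL Sxw Syw Exy.
have T6 := triL Syw Sxw Eyx.
have T7 := triL Sxz Syz Exy.
have T8 := triL Syz Sxz Eyx.
have Nzw : (z \in S) != (w \in S) by rewrite Hw (negbTE Hz).
have Nwz : (w \in S) != (z \in S) by rewrite Hw (negbTE Hz).
have Nyx : (y \in S) != (x \in S) by rewrite Hx (negbTE Hy).
have Nxy : (x \in S) != (y \in S) by rewrite Hx (negbTE Hy).
have Axw : (x \in S) == (w \in S) by rewrite Hx Hw.
have Ayz : (y \in S) == (z \in S) by rewrite (negbTE Hy) (negbTE Hz).
have Awx : (w \in S) == (x \in S) by rewrite Hx Hw.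
have Azy : (z \in S) == (y \in S) by rewrite (negbTE Hy) (negbTE Hz).
have F2 := no_detour Sxz Sxw Ezw Nzw Axw.
have F3 := no_detour Syw Syz Ewz Nwz Ayz.
have F4 := no_detour (shortest_rev e_sym Syw) (shortest_rev e_sym Sxw) Eyx Nyx Awx.
have F5 := no_detour (shortest_rev e_sym Sxz) (shortest_rev e_sym Syz) Exy Nxy Azy.
rewrite !size_rev_belast in F4 F5.
have Od := Hodd H H' N (ex_intro _ sxw (conj Sxw erefl)) (ex_intro _ syz (conj Syz erefl)).
have Od' : (size sxw + size syz) %% 2 = 1 by rewrite modn2 Od.
move: U1 U2 U3 U4 L1 L2 T1 T2 T3 T4 T5 T6 T7 T8 F2 F3 F4 F5 Od'.
move: (size sxw) (size sxz) (size syw) (size syz) => a b c d.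
clear -ik jk.
lia.
Qed.


Lemma PU_new_new ta tb : ParentU h (inr ta) (inr tb).
Proof.
case: ta => [[[x y] i] H]; case: tb => [[[w z] j] H'] n c1 c2 Db D1 D2 H1 H2.
rewrite h_sym in H1; rewrite h_sym in H2.
have N1 := nbr_new H1; have N2 := nbr_new H2.
have Ea := pos_of_new H i; rewrite /mkv in Ea.
have Eb := pos_of_new H' j; rewrite /mkv in Eb.
rewrite Ea Eb in Db; rewrite Ea in D1 D2.
have ik := ltn_ord i; have jk := ltn_ord j.
have tie : dst h (pos H i.+1) (pos H' j.+1) n.+1 -> dst h (pos H i.+1) (pos H' j) n ->
           dst h (pos H i.+1) (pos H' j.+2) n -> False.
  case: (eqVneq (x, y) (w, z)) => [[Ew Ez]|Nxy]; last exact: tie_diff.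
  subst w z; rewrite !(pos_irr H' H); exact: tie_same.
case: N1 => E1; case: N2 => E2; subst c1 c2 => //.
  by case: (tie Db D1 D2).
by case: (tie Db D2 D1).
Qed.

Lemma subdiv_geodetic : geodetic h.
Proof.
apply: (geodetic_crit h_sym) => [[a|ta] [b|tb]].
- by left; apply: PU_old_old.
- by left; apply: PU_old_new.
- by right; apply: PU_old_new.
- by left; apply: PU_new_new.
Qed.

End Main.

Theorem proposition1 (V : finType) (e : rel V)
  (e_sym : symmetric e) (e_irr : irreflexive e)
  (S : {set V})
  (Hgeo : geodetic e)
  (HS : geod_closed e S) (HT : geod_closed e (~: S))
  (Hodd : forall u v w x : V, cut_edge e S u v -> cut_edge e S w x ->
          (u, v) != (w, x) ->
          forall n m, is_dist e u w n -> is_dist e v x m -> odd (n + m))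
  (k : nat) :
  geodetic (subdiv_rel e S k).
Proof. exact: (subdiv_geodetic e_sym HS HT Hgeo Hodd). Qed.
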